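(* Let $s$ be a positive even integer and $\mathfrak{S}\subseteq(\mathbb{Z}/s\mathbb{Z})^2$. Let $$\mathcal{N}(\mathfrak{S})=\left\{\tfrac32(\alpha-\beta)+\beta \bmod s/2 \ :\ (\alpha,\beta)\in\mathfrak{S},\ \alpha\equiv\beta\pmod 2\right\},$$ and assume $\mathcal{N}(\mathfrak{S})$ is a complete set of residues modulo $s/2$. Then for every $N\in\mathbb{N}$ there exists a residue $r_{N,s}$ modulo $3s$ such that for every $b\in\mathbb{Z}$ with $b\equiv r_{N,s}\pmod{3s}$ and $a=\frac23(N-b)+b$ we have $N\equiv b\pmod 3$, $a\equiv b\pmod 2$, and $(a,b)\bmod s\in\mathfrak{S}$.
   Context: Since $s$ is even, the parity of a residue modulo $s$ is well defined, and for $\alpha\equiv\beta\pmod 2$ the quantity $\frac32(\alpha-\beta)+\beta$ is a well-defined residue modulo $s/2$. *)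

(* Defs.v *)
From mathcomp Require Import all_boot all_order all_algebra.
Set Implicit Arguments. Unset Strict Implicit. Unset Printing Implicit Defensive.
Import Order.TTheory GRing.Theory Num.Theory.
Local Open Scope ring_scope.

(* Residues modulo s are represented by their canonical representatives
   0 <= x < s, i.e. by ordinals 'I_s; a subset of (Z/sZ)^2 is a
   {set 'I_s * 'I_s}. *)

Definition ord_int (s : nat) (x : 'I_s) : int := (nat_of_ord x)%:Z.

(* The residue class mod s/2 of 3/2(alpha - beta) + beta, computed on the
   canonical representatives (the division by 2 is exact when
   alpha = beta mod 2). *)
Definition nval (s : nat) (p : 'I_s * 'I_s) : int :=
  divz (3 * (ord_int p.1 - ord_int p.2)) 2 + ord_int p.2.

Definition N_complete (s : nat) (S : {set 'I_s * 'I_s}) : Prop :=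
  forall k : int, exists2 p, p \in S &
    (ord_int p.1 = ord_int p.2 %[mod 2])%Z /\
    (nval p = k %[mod (s./2)%:Z])%Z.

Definition pair_mod_in (s : nat) (S : {set 'I_s * 'I_s}) (a b : int) : Prop :=
  exists2 p, p \in S &
    ord_int p.1 = modz a s%:Z /\ ord_int p.2 = modz b s%:Z.

(* Main.v *)
Require Import Defs.
From mathcomp Require Import all_boot all_order all_algebra.
From mathcomp Require Import zify ring.
Import Order.TTheory GRing.Theory Num.Theory.
Local Open Scope ring_scope.

Lemma modz_exists (x y d : int) : (x = y %[mod d])%Z -> exists q, x = y + q * d.
Proof.
move=> H; have : (d %| x - y)%Z by rewrite -eqz_mod_dvd; apply/eqP.
case/dvdzP=> q Hq; exists q; lia.
Qed.

Lemma div2K (x : int) : divz (2 * x) 2 = x. Proof. lia. Qed.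
Lemma div3K (x : int) : divz (3 * x) 3 = x. Proof. lia. Qed.

Theorem lemma3p4 (s : nat) (S : {set 'I_s * 'I_s}) :
  (0 < s)%N -> ~~ odd s -> N_complete S ->
  forall N : nat, exists r : int, forall b : int,
    (b = r %[mod (3 * s)%:Z])%Z ->
    let a : int := divz (2 * (N%:Z - b)) 3 + b in
    (N%:Z = b %[mod 3])%Z /\ (a = b %[mod 2])%Z /\ pair_mod_in S a b.
Proof.
move=> s0 sev NC N.
have hs : s%:Z = 2 * (s./2)%:Z.
  have := odd_double_half s; rewrite (negbTE sev) add0n => E.
  by rewrite -{1}E -muln2 PoszM mulrC.
have [p pS [hpar hn]] := NC N%:Z.
move: hpar hn; rewrite /nval.
have ha := ltn_ord p.1; have hbt := ltn_ord p.2.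
rewrite /ord_int.
move=> hpar hn.
set al := nat_of_ord p.1 in ha hpar hn *. set be := nat_of_ord p.2 in hbt hpar hn *.
have [u Hu] := @modz_exists _ _ _ hpar.
have E1 : 3 * (al%:Z - be%:Z) = 2 * (3 * u) by rewrite Hu; ring.
have E1' : divz (3 * (al%:Z - be%:Z)) 2 = 3 * u by rewrite E1 div2K.
rewrite E1' in hn.
have [v Hv] := @modz_exists _ _ _ hn.
exists (3 * al%:Z - 2 * N%:Z) => b hb.
have [w Hw] := @modz_exists _ _ _ hb.
rewrite PoszM in Hw.
have E2 : 2 * (N%:Z - b) = 3 * (2 * (N%:Z - al%:Z - w * s%:Z)) by rewrite Hw; ring.
have E3 : divz (2 * (N%:Z - b)) 3 = 2 * (N%:Z - al%:Z - w * s%:Z) by rewrite E2 div3K.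
cbv zeta; rewrite E3 /pair_mod_in.
have ha' : al%:Z < s%:Z by [].
have hb' : be%:Z < s%:Z by [].
move: hs Hu Hv Hw ha' hb'; clear E1 E1' E2 E3 hn hb hpar NC.
move: (s./2)%:Z => h' hs Hu Hv Hw ha' hb'.
split; first by rewrite Hw; lia.
split; first by lia.
exists p => //; rewrite /ord_int; split.
  have -> : 2 * (N%:Z - al%:Z - w * s%:Z) + b = w * s%:Z + al%:Z by lia.
  rewrite modzMDl modz_small //; apply/andP; split; lia.
have Hb : b = (v + 3 * w) * s%:Z + be%:Z by lia.
rewrite Hb modzMDl modz_small //; apply/andP; split; lia.
Qed.
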